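(* Assume $\lambda_1<0$ and let $e\in\mathbb{S}^{n-1}$. The infimum $c^\star_e\in[0,+\infty)$ of the set $\{c^\mu_e:\ \mu>0\}$ is a minimum, attained at a unique $\mu^\star>0$; consequently $c^\star_e>0$. Moreover, for every $c>c^\star_e$ there exist $0<\mu_1<\mu_2$ such that $c^{\mu_1}_e=c^{\mu_2}_e=c$, whereas for every $c\in(0,c^\star_e)$ there is no $\mu>0$ with $c^\mu_e=c$.
   Context: Setting. Let $N,n\geq 1$ be integers, $[N]=\{1,\dots,N\}$, and fix $T,L_1,\dots,L_n>0$. ''Periodic'' means $T$-periodic in $t$ and $L_\alpha$-periodic in $x_\alpha$ for each $\alpha\in[n]$. For each $i\in[N]$ let $A_i:\mathbb{R}\times\mathbb{R}^n\to\mathbb{R}^{n\times n}$ (symmetric) and $q_i:\mathbb{R}\times\mathbb{R}^n\to\mathbb{R}^n$, and let $\mathbf{L}=(l_{i,j}):\mathbb{R}\times\mathbb{R}^n\to\mathbb{R}^{N\times N}$, all periodic, with some $\delta\in(0,1)$ such that $\mathbf{L},q_i$ are $\delta/2$-Hölder in $t$ and $\delta$-Hölder in $x$, and $A_i$ is $\delta/2$-Hölder in $t$ and $C^{1+\delta}$ in $x$. Standing assumptions: (i) $\min_{i}\inf_{|y|=1}\inf_{(t,x)}y\cdot A_i(t,x)y>0$; (ii) for $i\neq j$, $\min_{(t,x)}l_{i,j}\geq 0$; (iii) the matrix $(\max_{(t,x)}l_{i,j}(t,x))_{i,j}$ is irreducible (leaves invariant no coordinate subspace $\mathrm{span}(\mathbf{e}_{i_1},\dots,\mathbf{e}_{i_k})$,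 $1\leq k\leq N-1$; $1\times1$ matrices are irreducible). $\mathcal{P}_iu=\partial_tu-\nabla\cdot(A_i\nabla u)+q_i\cdot\nabla u$, $\mathcal{Q}\mathbf{u}=(\mathcal{P}_iu_i)_i-\mathbf{L}\mathbf{u}$. For $z\in\mathbb{R}^n$, $\lambda_{1,z}$ is the unique real number for which there is a periodic $C^{1,2}$ function $\mathbf{u}_z$ with positive components and $\mathcal{Q}(e^{z\cdot x}\mathbf{u}_z)=\lambda_{1,z}e^{z\cdot x}\mathbf{u}_z$; $z\mapsto\lambda_{1,z}$ is strictly concave, attains a maximum, and $|\lambda_{1,-\mu e}|$ grows quadratically as $\mu\to+\infty$. $\lambda_1=\max_z\lambda_{1,z}$. For $\mu>0$, $c^\mu_e=\lambda_{1,-\mu e}/(-\mu)$. *)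

(* Defs.v *)
From HB Require Import structures.
From mathcomp Require Import all_boot all_order all_algebra.
From mathcomp Require Import all_classical all_reals all_analysis.
Set Implicit Arguments. Unset Strict Implicit. Unset Printing Implicit Defensive.
Import Order.TTheory GRing.Theory Num.Theory.
Import numFieldNormedType.Exports.
Local Open Scope classical_set_scope.
Local Open Scope ring_scope.

Section Defs.
Variables (R : realType) (n N : nat).

Definition ebasis (a : 'I_n) : 'rV[R]_n := delta_mx 0 a.
Definition dotv (z y : 'rV[R]_n) : R := \sum_(a < n) z 0 a * y 0 a.
Definition enorm (y : 'rV[R]_n) : R := Num.sqrt (dotv y y).

Definition periodic (V : Type) (T : R) (Lp : 'I_n -> R)
  (f : R -> 'rV[R]_n -> V) : Prop :=
  forall t x, f (t + T) x = f t x /\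
              forall a, f t (x + Lp a *: ebasis a) = f t x.

Definition holder_tx (d : R) (g : R -> 'rV[R]_n -> R) : Prop :=
  exists C : R, forall t s x y,
    `|g t x - g s y| <= C * (`|t - s| `^ (d / 2) + enorm (x - y) `^ d).

Definition holder_x (d : R) (g : R -> 'rV[R]_n -> R) : Prop :=
  exists C : R, forall t x y, `|g t x - g t y| <= C * enorm (x - y) `^ d.

Definition dt (g : R -> 'rV[R]_n -> R) (t : R) (x : 'rV[R]_n) : R :=
  'D_1 (fun s => g s x) t.
Definition dx (a : 'I_n) (g : R -> 'rV[R]_n -> R) (t : R) (x : 'rV[R]_n) : R :=
  'D_(ebasis a) (fun y => g t y) x.

Definition jcont (g : R -> 'rV[R]_n -> R) : Prop :=
  continuous (fun p : R * 'rV[R]_n => g p.1 p.2).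

Definition C12 (u : R -> 'rV[R]_n -> R) : Prop :=
  (forall t x, derivable (fun s => u s x) t 1) /\
  (forall t x a, derivable (fun y => u t y) x (ebasis a)) /\
  (forall t x a b, derivable (fun y => dx b u t y) x (ebasis a)) /\
  jcont u /\ jcont (dt u) /\ (forall a, jcont (dx a u)) /\
  (forall a b, jcont (dx a (dx b u))).

Definition Pop (A : R -> 'rV[R]_n -> 'M[R]_n) (q : R -> 'rV[R]_n -> 'rV[R]_n)
  (w : R -> 'rV[R]_n -> R) (t : R) (x : 'rV[R]_n) : R :=
  dt w t x
  - \sum_(a < n) dx a (fun t' y => \sum_(b < n) A t' y a b * dx b w t' y) t x
  + \sum_(a < n) q t x 0 a * dx a w t x.

Definition Qop (A : 'I_N -> R -> 'rV[R]_n -> 'M[R]_n)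
  (q : 'I_N -> R -> 'rV[R]_n -> 'rV[R]_n) (Lm : R -> 'rV[R]_n -> 'M[R]_N)
  (u : 'I_N -> R -> 'rV[R]_n -> R) (i : 'I_N) (t : R) (x : 'rV[R]_n) : R :=
  Pop (A i) (q i) (u i) t x - \sum_(j < N) Lm t x i j * u j t x.

(* lam is a principal eigenvalue lambda_{1,z}: there is a periodic C^{1,2}
   u_z with positive components with Q(e^{z.x} u_z) = lam e^{z.x} u_z *)
Definition is_lambda1z (T : R) (Lp : 'I_n -> R)
  (A : 'I_N -> R -> 'rV[R]_n -> 'M[R]_n)
  (q : 'I_N -> R -> 'rV[R]_n -> 'rV[R]_n) (Lm : R -> 'rV[R]_n -> 'M[R]_N)
  (z : 'rV[R]_n) (lam : R) : Prop :=
  exists u : 'I_N -> R -> 'rV[R]_n -> R,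
    (forall i, periodic T Lp (u i)) /\ (forall i, C12 (u i)) /\
    (forall i t x, 0 < u i t x) /\
    forall i t x,
      Qop A q Lm (fun j t' y => expR (dotv z y) * u j t' y) i t x
      = lam * (expR (dotv z x) * u i t x).

Definition lmax (Lm : R -> 'rV[R]_n -> 'M[R]_N) : 'M[R]_N :=
  \matrix_(i, j) sup (range (fun p : R * 'rV[R]_n => Lm p.1 p.2 i j)).

Definition irreducible_mx (M : 'M[R]_N) : Prop :=
  forall S : {set 'I_N}, (0 < #|S| < N)%N ->
    ~ (forall v : 'cV[R]_N, (forall i, i \notin S -> v i 0 = 0) ->
         forall i, i \notin S -> (M *m v) i 0 = 0).

Definition standing_assumptions (T : R) (Lp : 'I_n -> R) (d : R)
  (A : 'I_N -> R -> 'rV[R]_n -> 'M[R]_n)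
  (q : 'I_N -> R -> 'rV[R]_n -> 'rV[R]_n) (Lm : R -> 'rV[R]_n -> 'M[R]_N) : Prop :=
  [/\ (0 < n)%N, (0 < N)%N, 0 < T, (forall a, 0 < Lp a) & 0 < d < 1 ] /\
  (forall i, periodic T Lp (A i)) /\ (forall i, periodic T Lp (q i)) /\
  periodic T Lp Lm /\
  (forall i t x, (A i t x)^T = A i t x) /\
  (forall i j, holder_tx d (fun t x => Lm t x i j)) /\
  (forall i a, holder_tx d (fun t x => q i t x 0 a)) /\
  (forall i a b, holder_tx d (fun t x => A i t x a b)) /\
  (forall i a b c, forall t x, derivable (fun y => A i t y a b) x (ebasis c)) /\
  (forall i a b c, holder_x d (dx c (fun t x => A i t x a b))) /\
  (exists eps : R, 0 < eps /\ forall i t x (y : 'rV[R]_n), enorm y = 1 ->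
       eps <= dotv y (y *m A i t x)) /\
  (forall i j t x, i != j -> 0 <= Lm t x i j) /\
  irreducible_mx (lmax Lm).

End Defs.

(* Main.v *)
Require Import Defs.
From HB Require Import structures.
From mathcomp Require Import all_boot all_order all_algebra.
From mathcomp Require Import all_classical all_reals all_analysis.
From mathcomp.algebra_tactics Require Import ring lra.
Import Order.TTheory GRing.Theory Num.Theory.
Import numFieldNormedType.Exports.
Local Open Scope classical_set_scope.
Local Open Scope ring_scope.

Section S.
Variable R : realType.
Implicit Types G : R -> R.

Definition convexf (G : R -> R) := forall x y s, 0 < s < 1 ->
  G (s * x + (1 - s) * y) <= s * G x + (1 - s) * G y.

Lemma conv_bound {G} : convexf G -> forall x t, 0 < t <= 1 ->
  `|G (x + t) - G x| <= t * (`|G (x + 1) - G x| + `|G (x - 1) - G x|).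
Proof.
move=> cG x t /andP[t0 t1].
have u0 := normr_ge0 (G (x + 1) - G x).
have v0 := normr_ge0 (G (x - 1) - G x).
have hu := ler_norm (G (x + 1) - G x).
have hv := ler_norm (G x - G (x - 1)).
rewrite distrC in hv.
have [->|tlt1] := eqVneq t 1.
  rewrite mul1r; lra.
have t1' : t < 1 by rewrite lt_neqAle tlt1 t1.
have H1 := cG x (x + 1) (1 - t) ltac:(apply/andP; split; lra).
rewrite (_ : (1 - t) * x + (1 - (1 - t)) * (x + 1) = x + t) in H1; last by ring.
have t10 : 1 + t != 0 by rewrite gt_eqF //; lra.
have s0 : 0 < 1 / (1 + t) by rewrite divr_gt0 //; lra.
have s1 : 1 / (1 + t) < 1 by rewrite ltr_pdivrMr; lra.
have H2 := cG (x + t) (x - 1) (1 / (1 + t)) ltac:(apply/andP; split => //).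
rewrite (_ : 1 / (1 + t) * (x + t) + (1 - 1 / (1 + t)) * (x - 1) = x) in H2; last by field.
have es : 1 / (1 + t) * (1 + t) = 1 by field.
set s := 1 / (1 + t) in H2 s0 s1 es.
set A := G (x + t) in H1 H2 *; set B := G (x - 1) in H2 hv v0 *.
set C := G (x + 1) in H1 hu u0 *.
have H3 : (1 + t) * G x <= A + t * B.
  have : (1 + t) * G x <= (1 + t) * (s * A + (1 - s) * B) by rewrite ler_pM2l //; lra.
  have -> : (1 + t) * (s * A + (1 - s) * B) = (s * (1 + t)) * A + ((1 + t) - s * (1 + t)) * B by ring.
  by rewrite es; lra.
have P1 : t * (C - G x) <= t * `|C - G x| by rewrite ler_pM2l.
have P2 : t * (B - G x) <= t * `|B - G x| by rewrite ler_pM2l // ler_norm.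
have P3 : 0 <= t * `|C - G x| by rewrite mulr_ge0 // ltW.
have P4 : 0 <= t * `|B - G x| by rewrite mulr_ge0 // ltW.
rewrite mulrDr.
rewrite ler_norml; apply/andP; split; lra.
Qed.

Lemma conv_refl {G} : convexf G -> convexf (fun z => G (- z)).
Proof.
move=> cG x y s hs /=.
by rewrite (_ : - (s * x + (1 - s) * y) = s * (- x) + (1 - s) * (- y)); [apply: cG | ring].
Qed.

Lemma conv_lip {G} : convexf G -> forall x y, `|y| <= 1 ->
  `|G (x + y) - G x| <= `|y| * (`|G (x + 1) - G x| + `|G (x - 1) - G x|).
Proof.
move=> cG x y y1.
have [y0|y0|->] := ltgtP y 0; last by rewrite addr0 subrr normr0 mul0r.
- have := conv_bound (conv_refl cG) (- x) (- y).
  rewrite ltr0_norm // in y1 *.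
  rewrite !opprD !opprK (addrC `|G (x - 1) - G x|).
  move=> h; apply: h; apply/andP; split => //; lra.
- rewrite gtr0_norm // in y1 *.
  by apply: conv_bound => //; rewrite y0 y1.
Qed.

Lemma conv_cont {G} : convexf G -> continuous G.
Proof.
move=> cG x; apply/cvgrPdist_le => eps e0.
set K := `|G (x + 1) - G x| + `|G (x - 1) - G x|.
have K0 : 0 <= K by rewrite addr_ge0.
have d0 : 0 < Num.min 1 (eps / (K + 1)).
  by rewrite lt_min ltr01 divr_gt0 //; lra.
apply/nbhs_ballP; exists (Num.min 1 (eps / (K + 1))) => // t.
rewrite /ball /= lt_min => /andP[h1 h2].
have := conv_lip cG x (t - x).
rewrite distrC in h1 h2.
rewrite (_ : x + (t - x) = t); last by ring.
move=> /(_ (ltW h1)) h; rewrite distrC; apply: (le_trans h).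
have wE : eps / (K + 1) * (K + 1) = eps by rewrite divfK // gt_eqF //; lra.
set w := eps / (K + 1) in h2 wE.
have w0 : 0 <= w by apply: ltW; apply: le_lt_trans h2.
have : `|t - x| * K <= w * K by rewrite ler_wpM2r // ltW.
move=> hh; apply: (le_trans hh); by rewrite -wE ler_wpM2l // lerDl.
Qed.

Lemma kcont (g : R -> R) (x : R) : continuous g -> x != 0 ->
  {for x, continuous (fun mu => g mu / mu)}.
Proof. move=> cg x0. apply: cvgM; [exact: cg| exact: cvgV]. Qed.
End S.
Arguments convexf {R}.
Arguments conv_cont {R G}.
Arguments kcont {R}.

Theorem lemma3p5 (R : realType) (n N : nat) (T : R) (Lp : 'I_n -> R) (d : R)
  (A : 'I_N -> R -> 'rV[R]_n -> 'M[R]_n)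
  (q : 'I_N -> R -> 'rV[R]_n -> 'rV[R]_n) (Lm : R -> 'rV[R]_n -> 'M[R]_N)
  (lam1 : 'rV[R]_n -> R) (z0 : 'rV[R]_n) (e : 'rV[R]_n) :
  standing_assumptions T Lp d A q Lm ->
  (* lam1 z is the unique principal eigenvalue lambda_{1,z} *)
  (forall z, is_lambda1z T Lp A q Lm z (lam1 z)) ->
  (forall z l, is_lambda1z T Lp A q Lm z l -> l = lam1 z) ->
  (* known facts: strict concavity, maximum attained at z0, quadratic growth *)
  (forall z w (s : R), z != w -> 0 < s < 1 ->
     s * lam1 z + (1 - s) * lam1 w < lam1 (s *: z + (1 - s) *: w)) ->
  (forall z, lam1 z <= lam1 z0) ->
  (forall e' : 'rV[R]_n, enorm e' = 1 ->
     exists a b a' b' : R, 0 < a /\ 0 < a' /\ forall mu : R, 0 < mu ->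
       a * mu ^+ 2 - b <= `|lam1 (- mu *: e')| <= a' * mu ^+ 2 + b') ->
  (* lambda_1 = max_z lambda_{1,z} < 0 *)
  lam1 z0 < 0 ->
  enorm e = 1 ->
  let c := fun mu : R => lam1 (- mu *: e) / (- mu) in
  let cstar := inf [set c mu | mu in [set mu : R | 0 < mu]] in
  [/\ 0 <= cstar,
      exists! mu, 0 < mu /\ c mu = cstar,
      0 < cstar,
      (forall cc, cstar < cc -> exists mu1 mu2, 0 < mu1 < mu2 /\ c mu1 = cc /\ c mu2 = cc)
    & (forall cc, 0 < cc < cstar -> forall mu, 0 < mu -> c mu <> cc)].
Proof.
move=> _ _ _ Hconc Hmax Hgrow Hneg He c cstar.
pose g := fun mu : R => - lam1 (- mu *: e).
have e0 : e != 0.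
  apply/eqP => E; move: He; rewrite E /enorm /dotv big1 ?sqrtr0.
    by move/eqP; rewrite eq_sym oner_eq0.
  by move=> a _; rewrite mxE mul0r.
have gstrict : forall x y s, x != y -> 0 < s < 1 ->
    g (s * x + (1 - s) * y) < s * g x + (1 - s) * g y.
  move=> x y s xy hs.
  have zw : - x *: e != - y *: e.
    apply/negP => /eqP E; move/eqP: E; rewrite -subr_eq0 -scalerBl scaler_eq0 (negbTE e0) orbF.
    rewrite subr_eq0 eqr_opp => /eqP E; by rewrite E eqxx in xy.
  have := Hconc _ _ s zw hs.
  rewrite !scalerA -scalerDl (_ : s * - x + (1 - s) * - y = - (s * x + (1 - s) * y)); last by ring.
  rewrite /g; lra.
have cvx : convexf g.
  move=> x y s hs; have [->|xy] := eqVneq x y.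
    rewrite (_ : s * y + (1 - s) * y = y); last by ring.
    lra.
  exact/ltW/gstrict.
have gcont := conv_cont cvx.
set m := - lam1 z0.
have m0 : 0 < m by rewrite /m; lra.
have gm : forall mu, m <= g mu by move=> mu; rewrite /g /m lerN2.
have [a [b [a' [b' [a0 [_ hab]]]]]] := Hgrow e He.
have ggrow : forall mu, 0 < mu -> a * mu ^+ 2 - b <= g mu.
  move=> mu mu0; have /andP[+ _] := hab mu mu0.
  rewrite ler0_norm //; have := Hmax (- mu *: e); lra.
have cE : forall mu, c mu = g mu / mu.
  by move=> mu; rewrite /c /g invrN mulrN mulNr.
pose k := fun mu : R => g mu / mu.
have kc : forall mu, 0 < mu -> {for mu, continuous k}.
  by move=> mu mu0; apply: kcont => //; rewrite gt_eqF.
have g1p : 0 < g 1 + 1 by have := gm 1; lra.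
pose lo := Num.min 1 (m / (g 1 + 1)).
pose hi := Num.max 1 ((g 1 + 1 + `|b|) / a).
have lo0 : 0 < lo by rewrite lt_min ltr01 divr_gt0.
have loone : lo <= 1 by rewrite ge_min lexx.
have hi1 : 1 <= hi by rewrite le_max lexx.
have [mus musI musmin] : exists2 mus, mus \in `[lo, hi] &
    forall t, t \in `[lo, hi] -> k mus <= k t.
  apply: EVT_min; first lra.
  apply: continuous_in_subspaceT => mu; rewrite inE /= in_itv /= => /andP[h _].
  apply: kc; lra.
move: musI; rewrite in_itv /= => /andP[mulo muhi].
have mus0 : 0 < mus by lra.
have k1 : k 1 = g 1 by rewrite /k divr1.
have kmus1 : k mus <= g 1 by rewrite -k1; apply: musmin; rewrite in_itv /=; apply/andP; split.
have minall : forall mu, 0 < mu -> k mus <= k mu.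
  move=> mu mu0.
  have [mulo'|] := ltP mu lo.
    apply: (le_trans kmus1); rewrite /k ler_pdivlMr //.
    have : mu < m / (g 1 + 1) by apply: (lt_le_trans mulo'); rewrite ge_min lexx orbT.
    rewrite ltr_pdivlMr // => hh; have := gm mu; nra.
  move=> lomu; have [muhi'|] := ltP hi mu.
    apply: (le_trans kmus1); rewrite /k ler_pdivlMr //.
    have : (g 1 + 1 + `|b|) / a < mu by apply: le_lt_trans muhi'; rewrite le_max lexx orbT.
    rewrite ltr_pdivrMr // => hh.
    have mu1 : 1 <= mu by apply: le_trans hi1 _; apply: ltW.
    have := ggrow mu mu0; rewrite expr2 => hg.
    have hb := ler_norm b; have hb0 := normr_ge0 b.
    have P1 : mu * (g 1 + 1 + `|b|) <= mu * (mu * a) by rewrite ler_pM2l //; apply: ltW.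
    have P2 : 0 <= `|b| * (mu - 1) by rewrite mulr_ge0 // subr_ge0.
    nra.
  move=> h2; apply: musmin; rewrite in_itv /=; apply/andP; split => //.
have csE : cstar = k mus.
  have memS : [set c mu | mu in [set mu | 0 < mu]] (k mus) by exists mus => //; rewrite cE.
  have lbS : lbound [set c mu | mu in [set mu | 0 < mu]] (k mus).
    by move=> _ [mu /= mu0 <-]; rewrite cE; apply: minall.
  apply/eqP; rewrite eq_le; apply/andP; split.
    by apply: ge_inf => //; exists (k mus).
  by apply: lb_le_inf => //; exists (k mus).
have kmus0 : 0 < k mus by rewrite /k divr_gt0 //; have := gm mus; lra.
have gk : forall mu, 0 < mu -> g mu = k mu * mu by move=> mu mu0; rewrite /k divfK // gt_eqF.
have cs0 : 0 < cstar by rewrite csE.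
rewrite -/cstar; split.
- exact: ltW.
- exists mus; split; first by split => //; rewrite cE csE.
  move=> mu' [mu0' cmu']; have [//|neq] := eqVneq mus mu'; exfalso.
  have hs : 0 < (1 / 2 : R) < 1 by apply/andP; split; lra.
  have := gstrict _ _ _ neq hs.
  set mid := 1 / 2 * mus + (1 - 1 / 2) * mu'.
  have mid0 : 0 < mid by rewrite /mid; lra.
  have := minall mid mid0; rewrite -csE => hmid.
  rewrite (gk mid mid0) (gk mus mus0) (gk mu' mu0') -/(k mus) -csE.
  have km' : k mu' = cstar by rewrite -cmu' cE.
  rewrite km'.
  have : cstar * mid <= k mid * mid by rewrite ler_pM2r.
  rewrite /mid; lra.
- exact: cs0.
- move=> cc csc.
  have cc0 : 0 < cc by lra.
  pose h := fun mu => g mu - cc * mu.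
  have hcont : continuous h.
    move=> x; apply: cvgB; first exact: gcont.
    by apply: cvgM; [exact: cvg_cst | exact: cvg_id].
  have hmus : h mus < 0.
    rewrite /h (gk mus mus0) -csE.
    have : cstar * mus < cc * mus by rewrite ltr_pM2r.
    lra.
  have hsol : forall mu, 0 < mu -> h mu = 0 -> c mu = cc.
    move=> mu mu0; rewrite /h cE => /eqP; rewrite subr_eq0 => /eqP ->.
    by rewrite mulfK // gt_eqF.
  pose lw := Num.min (mus / 2) (m / (2 * cc)).
  have lw0 : 0 < lw by rewrite lt_min !divr_gt0 // mulr_gt0.
  have lomus : lw <= mus by rewrite ge_min; apply/orP; left; lra.
  have hlw : 0 < h lw.
    have : lw <= m / (2 * cc) by rewrite ge_min lexx orbT.
    rewrite ler_pdivlMr ?mulr_gt0 // => hh.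
    have := gm lw; rewrite /h; lra.
  pose hi2 := Num.max (mus + 1) ((cc + `|b| + 1) / a).
  have hi2a : (cc + `|b| + 1) / a <= hi2 by rewrite le_max lexx orbT.
  have hi2m : mus + 1 <= hi2 by rewrite le_max lexx.
  have hi20 : 0 < hi2 by lra.
  have hhi2 : 0 < h hi2.
    move: hi2a; rewrite ler_pdivrMr // => hh.
    have := ggrow hi2 hi20; rewrite expr2 => hg.
    have hb := ler_norm b; have hb0 := normr_ge0 b.
    have P1 : hi2 * (cc + `|b| + 1) <= hi2 * (hi2 * a) by rewrite ler_pM2l.
    have P2 : 0 <= (`|b| + 1) * (hi2 - 1) by rewrite mulr_ge0 //; lra.
    rewrite /h; nra.
  have [mu1 mu1I hmu1] : exists2 mu1, mu1 \in `[lw, mus] & h mu1 = 0.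
    apply: IVT => //; first exact: continuous_subspaceT.
    rewrite ge_min le_max; apply/andP; split; apply/orP; [right|left]; exact: ltW.
  have [mu2 mu2I hmu2] : exists2 mu2, mu2 \in `[mus, hi2] & h mu2 = 0.
    apply: IVT; [lra | exact: continuous_subspaceT |].
    rewrite ge_min le_max; apply/andP; split; apply/orP; [left|right]; exact: ltW.
  move: mu1I mu2I; rewrite !in_itv /= => /andP[l1 u1] /andP[l2 u2].
  have n1 : mu1 != mus by apply/eqP => E; move: hmus; rewrite -E hmu1 ltxx.
  have n2 : mu2 != mus by apply/eqP => E; move: hmus; rewrite -E hmu2 ltxx.
  have m1 : mu1 < mus by rewrite lt_neqAle n1 u1.
  have m2 : mus < mu2 by rewrite lt_neqAle eq_sym n2 l2.
  exists mu1, mu2; split; first by apply/andP; split; lra.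
  split; apply: hsol => //; lra.
- move=> cc /andP[cc0 ccs] mu mu0; rewrite cE => E.
  have := minall mu mu0; rewrite -csE /k E; lra.
Qed.
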